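(* Let $\mathbf v\in V$ be nonzero with $L_1\mathbf v=L_2\mathbf v=\mathbf 0$, $H_1\mathbf v=m_1\mathbf v$ and $H_2\mathbf v=m_2\mathbf v$. Then $L_3R_1^i\mathbf v=L_3R_2^j\mathbf v=\mathbf 0$ for all nonnegative integers $i,j$, and for all positive integers $i,j$: (i) $L_3R_1^iR_2^j\mathbf v=-ij(m_2-j+1)\,R_1^{i-1}R_2^{j-1}\mathbf v$; (ii) $L_3R_2^jR_1^i\mathbf v=ij(m_1-i+1)\,R_2^{j-1}R_1^{i-1}\mathbf v$.
   Context: Let $d\ge1$, $\mathbb F_3=\{0,1,2\}$, $X=\mathbb F_3^d$, and $V=\mathbb C^X$ with standard basis $\{\hat y:y\in X\}$. The type of $y\in X$ is $(r,s,t)$ where $r,s,t$ are the numbers of coordinates of $y$ equal to $0,1,2$ respectively ($r+s+t=d$). Define linear operators on $V$ by their action on basis vectors: $R_1\hat y$ is the sum of $\hat z$ over all $z$ obtained from $y$ by changing exactly one coordinate equal to $0$ into $1$ (an empty sum is $0$); similarly $R_2$ changes one coordinate $1\mapsto2$, $L_1$ changes one coordinate $1\mapsto 0$, $L_2$ changes one coordinate $2\mapsto1$, $L_3$ changes one coordinate $2\mapsto 0$. For $y$ of type $(r,s,t)$, $H_1\hat y=(r-s)\hat y$ and $H_2\hat y=(s-t)\hat y$. *)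

(* Defs.v *)
(* C is modelled by algC (algebraically closed field of
   characteristic 0 containing the algebraic complex numbers). *)
From HB Require Import structures.
From mathcomp Require Import all_boot all_order all_algebra.
From mathcomp Require Import algC.
Set Implicit Arguments. Unset Strict Implicit. Unset Printing Implicit Defensive.
Import Order.TTheory GRing.Theory Num.Theory.
Local Open Scope ring_scope.

(* F_3 = {0,1,2} as 'I_3 *)
Definition f0 : 'I_3 := @Ordinal 3 0 isT.
Definition f1 : 'I_3 := @Ordinal 3 1 isT.
Definition f2 : 'I_3 := @Ordinal 3 2 isT.

Notation X d := {ffun 'I_d -> 'I_3}.
Notation V d := {ffun X d -> algC^o}.

Definition basis d (y : X d) : V d := [ffun z => (z == y)%:R].

Definition upd d (y : X d) (k : 'I_d) (b : 'I_3) : X d :=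
  [ffun l => if l == k then b else y l].

Definition step_basis d (a b : 'I_3) (y : X d) : V d :=
  \sum_(k : 'I_d | y k == a) basis (upd y k b).

Definition step d (a b : 'I_3) (v : V d) : V d :=
  \sum_(y : X d) v y *: step_basis a b y.

Definition R1 d := @step d f0 f1.
Definition R2 d := @step d f1 f2.
Definition L1 d := @step d f1 f0.
Definition L2 d := @step d f2 f1.
Definition L3 d := @step d f2 f0.

Definition cnt d (y : X d) (a : 'I_3) : nat := #|[set k | y k == a]|.

Definition H1 d (v : V d) : V d :=
  [ffun y => ((cnt y f0)%:R - (cnt y f1)%:R) * v y].
Definition H2 d (v : V d) : V d :=
  [ffun y => ((cnt y f1)%:R - (cnt y f2)%:R) * v y].

(* Main.v *)
Require Import Defs.
From HB Require Import structures.
From mathcomp Require Import all_boot all_order all_algebra.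
From mathcomp Require Import algC.
From mathcomp Require Import ring.
Set Implicit Arguments. Unset Strict Implicit. Unset Printing Implicit Defensive.
Import Order.TTheory GRing.Theory Num.Theory.
Local Open Scope ring_scope.

Section Concrete.
Variable d : nat.

Definition Sp (a b : 'I_3) (v : V d) : V d :=
  [ffun z : X d => \sum_(k : 'I_d | z k == b) v (upd z k a)].

Lemma upd_k (y : X d) k b : upd y k b k = b.
Proof. by rewrite ffunE eqxx. Qed.
Lemma upd_ne (y : X d) k b l : l != k -> upd y k b l = y l.
Proof. by rewrite ffunE => /negbTE ->. Qed.
Lemma upd_upd (y : X d) k a b : upd (upd y k a) k b = upd y k b.
Proof. by apply/ffunP=> l; rewrite !ffunE; case: eqP. Qed.
Lemma upd_id (y : X d) k a : y k = a -> upd y k a = y.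
Proof. by move=> <-; apply/ffunP=> l; rewrite !ffunE; case: eqP => // ->. Qed.
Lemma upd_comm (y : X d) k l a b : k != l ->
  upd (upd y k a) l b = upd (upd y l b) k a.
Proof.
move=> nkl; apply/ffunP=> m; rewrite !ffunE.
have [Eml|nml] := eqVneq m l; have [Emk|nmk] := eqVneq m k => //.
by rewrite -Emk -Eml eqxx in nkl.
Qed.

Lemma step_Sp (a b : 'I_3) (v : V d) : a != b -> step a b v = Sp a b v.
Proof.
move=> nab; apply/ffunP=> z; rewrite /step sum_ffunE ffunE.
under eq_bigr do rewrite ffunE /step_basis sum_ffunE scaler_sumr big_mkcond.
rewrite exchange_big /= [RHS]big_mkcond; apply: eq_bigr => k _.
case: (eqVneq (z k) b) => [zkb|zkb].
  rewrite (bigD1 (upd z k a)) //= upd_k (eqxx a) big1 ?addr0.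
    rewrite !ffunE upd_upd (upd_id zkb) (eqxx z) /=; exact: mulr1.
  move=> y nyz; case: ifP => // /eqP yka; rewrite !ffunE.
  case: (eqVneq z (upd y k b)) => [Ez|]; last by move=> _; exact: mulr0.
  by move: nyz; rewrite Ez upd_upd (upd_id yka) (eqxx y).
apply: big1 => y _; case: ifP => // _; rewrite !ffunE.
case: (eqVneq z (upd y k b)) => [Ez|]; last by move=> _; exact: mulr0.
by move: zkb; rewrite Ez upd_k (eqxx b).
Qed.

Lemma SpD a b x y : Sp a b (x + y) = Sp a b x + Sp a b y.
Proof. by apply/ffunP=> z; rewrite !ffunE -big_split; apply: eq_bigr => k _; rewrite ffunE. Qed.
Lemma SpZ a b (c : algC) x : Sp a b (c *: x) = c *: Sp a b x.
Proof. by apply/ffunP=> z; rewrite !ffunE scaler_sumr; apply: eq_bigr => k _; rewrite ffunE. Qed.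

Lemma SpSp a b c e (v : V d) z :
  Sp a b (Sp c e v) z =
  \sum_k (if z k == b then (a == e)%:R * v (upd z k c) else 0) +
  \sum_k \sum_l (if [&& l != k, z k == b & z l == e]
                 then v (upd (upd z k a) l c) else 0).
Proof.
rewrite ffunE big_mkcond -big_split; apply: congr_big => // k _ /=.
rewrite ffunE big_mkcond (bigD1 k) //= upd_k upd_upd.
case: (eqVneq (z k) b) => zkb /=; last by rewrite add0r big1 // => l _; rewrite andbF.
congr (_ + _); first by case: (a == e); rewrite ?mul1r ?mul0r.
rewrite big_mkcond; apply: congr_big => // l _ /=.
by case: (eqVneq l k) => //= nlk; rewrite upd_ne.
Qed.

Lemma comm a b c e (v : V d) :
  Sp a b (Sp c e v) = Sp c e (Sp a b v) + (a == e)%:R *: Sp c b v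
     - (c == b)%:R *: Sp a e v.
Proof.
apply/ffunP=> z.
have E (f g h : V d) : (f + g - h) z = f z + g z - h z by rewrite !ffunE.
rewrite E !SpSp !ffunE.
set S1 := \sum_k \sum_l _.
set S2 := \sum_k \sum_l _.
have -> : S1 = S2.
  rewrite /S1 /S2 exchange_big; apply: congr_big => // k _; apply: congr_big => // l _.
  case: (eqVneq l k) => [->|nlk] //=; rewrite andbC.
  by case: ifP => // _; rewrite upd_comm.
have HA (x y w u : 'I_3) :
   \sum_k (if z k == x then (y == w)%:R * v (upd z k u) else 0) =
   (y == w)%:R *: \sum_(k < d | z k == x) v (upd z k u).
  rewrite scaler_sumr [RHS]big_mkcond; apply: congr_big => // k _.

rewrite -(HA b a e c) -(HA e c b a).

ring.
Qed.

Lemma Spaa a (v : V d) z : Sp a a v z = (cnt z a)%:R * v z.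
Proof.
rewrite ffunE (eq_bigr (fun _ => v z)) => [|k /eqP zk]; last by rewrite upd_id.
by rewrite sumr_const /cnt cardsE mulr_natl.
Qed.

Lemma ffB (f g : V d) z : (f - g) z = f z - g z.
Proof. by rewrite !ffunE. Qed.

Lemma H1_Sp (v : V d) : H1 v = Sp f0 f0 v - Sp f1 f1 v.
Proof. by apply/ffunP=> z; rewrite ffunE ffB !Spaa mulrBl. Qed.
Lemma H2_Sp (v : V d) : H2 v = Sp f1 f1 v - Sp f2 f2 v.
Proof. by apply/ffunP=> z; rewrite ffunE ffB !Spaa mulrBl. Qed.
Lemma SpN a b (x : V d) : Sp a b (- x) = - Sp a b x.
Proof. by rewrite -scaleN1r SpZ scaleN1r. Qed.
Lemma SpB a b (x y : V d) : Sp a b (x - y) = Sp a b x - Sp a b y.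
Proof. by rewrite SpD SpN. Qed.
Lemma Sp0 a b : Sp a b (0 : V d) = 0.
Proof. by have := SpZ a b 0 0; rewrite !scale0r. Qed.
End Concrete.

Section Gen.
Variable W : lmodType algC.
Variable Q : W -> W.
Hypothesis QD : forall x y, Q (x + y) = Q x + Q y.
Hypothesis QZ : forall (k : algC) x, Q (k *: x) = k *: Q x.

Lemma QN x : Q (- x) = - Q x.
Proof. by rewrite -scaleN1r QZ scaleN1r. Qed.
Lemma Q0 : Q 0 = 0.
Proof. by have := QZ 0 0; rewrite !scale0r. Qed.
Lemma iterZ n k x : iter n Q (k *: x) = k *: iter n Q x.
Proof. by elim: n => //= n IH; rewrite IH QZ. Qed.
Lemma iter0 n : iter n Q 0 = 0.
Proof. by elim: n => //= n IH; rewrite IH Q0. Qed.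
Lemma iterN n x : iter n Q (- x) = - iter n Q x.
Proof. by elim: n => //= n IH; rewrite IH QN. Qed.
Lemma iter_pred n (c : algC) y :
  (n%:R * c) *: Q (iter n.-1 Q y) = (n%:R * c) *: iter n Q y.
Proof. by case: n => [|n] //=; rewrite mul0r !scale0r. Qed.

Lemma comm_iter (P D : W -> W) :
  (forall x, P (Q x) = Q (P x) + D x) -> (forall x, D (Q x) = Q (D x)) ->
  forall n x, P (iter n Q x) = iter n Q (P x) + n%:R *: iter n.-1 Q (D x).
Proof.
move=> hP hD.
have hDn n x : D (iter n Q x) = iter n Q (D x) by elim: n => //= n IH; rewrite hD IH.
elim=> [|n IH] x /=; first by rewrite scale0r addr0.
rewrite hP IH QD QZ -[n%:R]mulr1 iter_pred mulr1 hDn -addrA.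
by rewrite -{2}[iter n Q (D x)]scale1r -scalerDl natr1.
Qed.

Lemma H_iter (H : W -> W) v mu :
  (forall x, H (Q x) = Q (H x) - 2 *: Q x) -> H v = mu *: v ->
  forall m, H (iter m Q v) = (mu - 2 * m%:R) *: iter m Q v.
Proof.
move=> hH Hv; elim=> [|m IH] /=; first by rewrite mulr0 subr0.
by rewrite hH IH QZ -scalerBl; congr (_ *: _); rewrite -natr1; ring.
Qed.

Lemma LH_iter (L H : W -> W) v mu :
  (forall x, L (Q x) = Q (L x) + H x) ->
  (forall m, H (iter m Q v) = (mu - 2 * m%:R) *: iter m Q v) -> L v = 0 ->
  forall n, L (iter n Q v) = (n%:R * (mu - n%:R + 1)) *: iter n.-1 Q v.
Proof.
move=> hL hH Lv; elim=> [|n IH] /=; first by rewrite Lv mul0r scale0r.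
rewrite hL IH hH QZ iter_pred -scalerDl; congr (_ *: _); rewrite -natr1; ring.
Qed.
End Gen.

Theorem lemma2p9 (d : nat) (hd : (0 < d)%N) (v : V d) (m1 m2 : algC) :
  v != 0 ->
  L1 v = 0 -> L2 v = 0 ->
  H1 v = m1 *: v -> H2 v = m2 *: v ->
  (forall i : nat, L3 (iter i (@R1 d) v) = 0) /\
  (forall j : nat, L3 (iter j (@R2 d) v) = 0) /\
  (forall i j : nat, (0 < i)%N -> (0 < j)%N ->
     L3 (iter i (@R1 d) (iter j (@R2 d) v))
       = - ((i * j)%:R * (m2 - j%:R + 1)) *: iter i.-1 (@R1 d) (iter j.-1 (@R2 d) v)) /\
  (forall i j : nat, (0 < i)%N -> (0 < j)%N ->
     L3 (iter j (@R2 d) (iter i (@R1 d) v))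
       = ((i * j)%:R * (m1 - i%:R + 1)) *: iter j.-1 (@R2 d) (iter i.-1 (@R1 d) v)).
Proof.
move=> _ hL1 hL2 hH1 hH2.
have sR1 : @R1 d =1 Sp f0 f1 by move=> x; rewrite /R1 step_Sp.
have sR2 : @R2 d =1 Sp f1 f2 by move=> x; rewrite /R2 step_Sp.
have sL3 : @L3 d =1 Sp f2 f0 by move=> x; rewrite /L3 step_Sp.
rewrite /L1 step_Sp // in hL1; rewrite /L2 step_Sp // in hL2.
rewrite H1_Sp in hH1; rewrite H2_Sp in hH2.
have QD1 := @SpD d f0 f1; have QZ1 := @SpZ d f0 f1.
have QD2 := @SpD d f1 f2; have QZ2 := @SpZ d f1 f2.
have rA (x : V d) : Sp f2 f0 (Sp f0 f1 x) = Sp f0 f1 (Sp f2 f0 x) + (fun y => - Sp f2 f1 y) x.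
  by rewrite comm /= ?scale0r ?scale1r ?addr0.
have rB (x : V d) : (fun y => - Sp f2 f1 y) (Sp f0 f1 x) = Sp f0 f1 ((fun y => - Sp f2 f1 y) x).
  by rewrite /= SpN comm /= ?scale0r ?scale1r ?addr0 ?subr0.
have rC (x : V d) : Sp f2 f0 (Sp f1 f2 x) = Sp f1 f2 (Sp f2 f0 x) + Sp f1 f0 x.
  by rewrite comm /= ?scale0r ?scale1r ?addr0 ?subr0.
have rD (x : V d) : Sp f1 f0 (Sp f1 f2 x) = Sp f1 f2 (Sp f1 f0 x).
  by rewrite comm /= ?scale0r ?scale1r ?addr0 ?subr0.
have rE (x : V d) : Sp f1 f0 (Sp f0 f1 x) = Sp f0 f1 (Sp f1 f0 x) + (Sp f0 f0 x - Sp f1 f1 x).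
  by rewrite comm /= ?scale0r ?scale1r ?addr0 ?subr0 addrA.
have rF (x : V d) : Sp f2 f1 (Sp f1 f2 x) = Sp f1 f2 (Sp f2 f1 x) + (Sp f1 f1 x - Sp f2 f2 x).
  by rewrite comm /= ?scale0r ?scale1r ?addr0 ?subr0 addrA.
have rG (x : V d) : (fun y => Sp f0 f0 y - Sp f1 f1 y) (Sp f0 f1 x)
   = Sp f0 f1 ((fun y => Sp f0 f0 y - Sp f1 f1 y) x) - 2 *: Sp f0 f1 x.
  rewrite /= SpB (comm f0 f0 f0 f1) (comm f1 f1 f0 f1) /= ?scale0r ?scale1r ?addr0 ?subr0 ?sub0r.
  by rewrite opprD addrACA -opprD -[2]/(2%:R) scaler_nat mulr2n.
have rH (x : V d) : (fun y => Sp f1 f1 y - Sp f2 f2 y) (Sp f1 f2 x)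
   = Sp f1 f2 ((fun y => Sp f1 f1 y - Sp f2 f2 y) x) - 2 *: Sp f1 f2 x.
  rewrite /= SpB (comm f1 f1 f1 f2) (comm f2 f2 f1 f2) /= ?scale0r ?scale1r ?addr0 ?subr0 ?sub0r.
  by rewrite opprD addrACA -opprD -[2]/(2%:R) scaler_nat mulr2n.
have l3v : Sp f2 f0 v = 0.
  have := comm f1 f0 f2 f1 v; rewrite /= ?scale0r ?scale1r ?addr0 ?subr0.
  by rewrite hL1 hL2 !Sp0 add0r => ->.
have p1 i : Sp f2 f0 (iter i (Sp f0 f1) v) = 0.
  by rewrite (comm_iter QD1 QZ1 rA rB) l3v /= hL2 oppr0 !(iter0 QZ1) scaler0 addr0.
have p2 j : Sp f2 f0 (iter j (Sp f1 f2) v) = 0.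
  by rewrite (comm_iter QD2 QZ2 rC rD) l3v hL1 !(iter0 QZ2) scaler0 addr0.
have hh1 := H_iter QZ1 rG hH1.
have hh2 := H_iter QZ2 rH hH2.
have ll1 : forall n, Sp f1 f0 (iter n (Sp f0 f1) v)
    = (n%:R * (m1 - n%:R + 1)) *: iter n.-1 (Sp f0 f1) v.
  exact: (LH_iter QZ1 rE hh1 hL1).
have ll2 : forall n, Sp f2 f1 (iter n (Sp f1 f2) v)
    = (n%:R * (m2 - n%:R + 1)) *: iter n.-1 (Sp f1 f2) v.
  exact: (LH_iter QZ2 rF hh2 hL2).
split; first by move=> i; rewrite sL3 (eq_iter sR1); exact: p1.
split; first by move=> j; rewrite sL3 (eq_iter sR2); exact: p2.
split=> i j _ _; rewrite sL3 !(eq_iter sR1) !(eq_iter sR2).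
  rewrite (comm_iter QD1 QZ1 rA rB) p2 /= ll2 (iter0 QZ1) add0r (iterN QZ1).
  rewrite (iterZ QZ1) scalerN scalerA -scaleNr; congr (_ *: _); rewrite natrM; ring.
rewrite (comm_iter QD2 QZ2 rC rD) p1 ll1 (iter0 QZ2) add0r (iterZ QZ2) scalerA.
by congr (_ *: _); rewrite natrM; ring.
Qed.
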